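(* Let $S^{(1)},\dots,S^{(n)}$ be arbitrary labeled samples, each of size $m$, $S^{(i)}=\{(x^{(i)}_j,y^{(i)}_j)\}_{j\in[m]}\subseteq\{\pm1\}^d\times\{\pm1\}$, let $\mathcal{H}$ be a class of functions $\{\pm1\}^d\to\{\pm1\}$, and let $t\in\mathbb{N}$. Let $h^{(1)},\dots,h^{(n)}$ be the output of $\textsc{Boost}(S^{(1)},\dots,S^{(n)},\mathcal{H},t)$. For each iteration $s\in[t]$, let $\Gamma_s\in[0,1]$ be the value satisfying $$\sum_{i\in[n]}W^{(i)}\Big(\sum_{j\in[m]}\frac{w^{(i)}_j}{W^{(i)}}\,y^{(i)}_j h^\star(x^{(i)}_j)\Big)^2=\Gamma_s\sum_{i\in[n]}W^{(i)},$$ where $w^{(i)}_j,W^{(i)},h^\star$ are the quantities of iteration $s$. Then $$\frac{1}{nm}\sum_{i\in[n]}\sum_{j\in[m]}\mathbf{1}\big[\mathrm{sign}(h^{(i)}(x^{(i)}_j))\neq y^{(i)}_j\big]\ \le\ \prod_{s\in[t]}\Big(1-\frac{\Gamma_s}{2}\Big).$$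
   Context: Algorithm $\textsc{Boost}(S^{(1)},\dots,S^{(n)},\mathcal{H},t)$: initialize real-valued functions $h^{(1)},\dots,h^{(n)}$ to the constant $0$. Repeat $t$ times: (1) for each $i\in[n],j\in[m]$ set $w^{(i)}_j=\exp(-y^{(i)}_j h^{(i)}(x^{(i)}_j))$ and $W^{(i)}=\sum_{j\in[m]}w^{(i)}_j$; (2) choose $h^\star\in\arg\max_{h\in\mathcal{H}}\sum_{i\in[n]}W^{(i)}\big(\sum_{j\in[m]}\frac{w^{(i)}_j}{W^{(i)}}y^{(i)}_jh(x^{(i)}_j)\big)^2$; (3) for each $i\in[n]$, update $h^{(i)}\leftarrow h^{(i)}+\alpha^{(i)}h^\star$ with $\alpha^{(i)}=\frac12\ln\Big(\frac{\sum_j w^{(i)}_j\mathbf{1}[y^{(i)}_j=h^\star(x^{(i)}_j)]}{\sum_j w^{(i)}_j\mathbf{1}[y^{(i)}_j\neq h^\star(x^{(i)}_j)]}\Big)$. Output $h^{(1)},\dots,h^{(n)}$ (used as classifiers via $\mathrm{sign}(h^{(i)})$). *)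

(* Defs.v *)
From HB Require Import structures.
From mathcomp Require Import all_boot all_order all_algebra.
From mathcomp Require Import reals sequences exp.
Set Implicit Arguments. Unset Strict Implicit. Unset Printing Implicit Defensive.
Import Order.TTheory GRing.Theory Num.Theory.
Local Open Scope ring_scope.

(* Encoding: {+1,-1} is encoded by bool (true = +1, false = -1).
   A point of {+-1}^d is a finite function 'I_d -> bool; a hypothesis
   {+-1}^d -> {+-1} is a finite function cube d -> bool. *)
Definition cube (d : nat) := {ffun 'I_d -> bool}.
Definition hyp (d : nat) := {ffun cube d -> bool}.

Definition pm1 {R : pzRingType} (b : bool) : R := if b then 1 else -1.

Section Boost.
Variables (R : realType) (d n m : nat).
Variables (x : 'I_n -> 'I_m -> cube d) (y : 'I_n -> 'I_m -> bool).

(* state of the algorithm: the real-valued functions h^(1..n) *)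
Definition bstate := 'I_n -> cube d -> R.

Definition bweight (F : bstate) (i : 'I_n) (j : 'I_m) : R :=
  expR (- (pm1 (y i j) * F i (x i j))).

Definition bW (F : bstate) (i : 'I_n) : R := \sum_(j < m) bweight F i j.

Definition bcorrect (F : bstate) (h : hyp d) (i : 'I_n) : R :=
  \sum_(j < m) bweight F i j * (y i j == h (x i j))%:R.
Definition bwrong (F : bstate) (h : hyp d) (i : 'I_n) : R :=
  \sum_(j < m) bweight F i j * (y i j != h (x i j))%:R.

Definition balpha (F : bstate) (h : hyp d) (i : 'I_n) : R :=
  ln (bcorrect F h i / bwrong F h i) / 2.

Definition bobjective (F : bstate) (h : hyp d) : R :=
  \sum_(i < n) bW F i *
    (\sum_(j < m) bweight F i j / bW F i * pm1 (y i j) * pm1 (h (x i j))) ^+ 2.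

Definition bstep (F : bstate) (h : hyp d) : bstate :=
  fun i z => F i z + balpha F h i * pm1 (h z).

Definition bzero : bstate := fun _ _ => 0.

Definition bstate_of (hs : seq (hyp d)) : bstate := foldl bstep bzero hs.

Definition hyp_default : hyp d := [ffun _ => true].

(* hs is a possible sequence of choices h^star of Boost(S,H,t): at each
   iteration s < t, the chosen hypothesis is in H and maximizes the objective
   (any tie-breaking is allowed). *)
Definition boost_run (H : {set hyp d}) (t : nat) (hs : seq (hyp d)) : Prop :=
  size hs = t /\
  forall s, (s < t)%N ->
    let F := bstate_of (take s hs) in
    let hstar := nth hyp_default hs s in
    hstar \in H /\ forall h, h \in H -> bobjective F h <= bobjective F hstar.

(* the step sizes alpha are well defined (finite) at every iteration *)
Definition boost_well_defined (t : nat) (hs : seq (hyp d)) : Prop :=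
  forall s, (s < t)%N -> forall i : 'I_n,
    let F := bstate_of (take s hs) in
    let hstar := nth hyp_default hs s in
    bcorrect F hstar i != 0 /\ bwrong F hstar i != 0.

End Boost.

(* Main.v *)
Require Import Defs.
From HB Require Import structures.
From mathcomp Require Import all_boot all_order all_algebra.
From mathcomp Require Import reals sequences exp.
From mathcomp Require Import ring lra.
Import Order.TTheory GRing.Theory Num.Theory.
Local Open Scope ring_scope.

Lemma bweight_step (R : realType) (d n m : nat)
  (x : 'I_n -> 'I_m -> cube d) (y : 'I_n -> 'I_m -> bool) (F : bstate R d n) (h : hyp d) i j :
  bweight x y (bstep x y F h) i j = bweight x y F i j *
    (if y i j == h (x i j) then expR (- balpha x y F h i) else expR (balpha x y F h i)).
Proof.
rewrite /bweight /bstep; case: (y i j); case: (h (x i j)); rewrite /pm1 /= -expRD;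
  congr expR; ring.
Qed.

Lemma bW_step (R : realType) (d n m : nat)
  (x : 'I_n -> 'I_m -> cube d) (y : 'I_n -> 'I_m -> bool) (F : bstate R d n) (h : hyp d) i :
  bW x y (bstep x y F h) i = bcorrect x y F h i * expR (- balpha x y F h i)
     + bwrong x y F h i * expR (balpha x y F h i).
Proof.
rewrite /bW /bcorrect /bwrong !mulr_suml -big_split /=; apply: eq_bigr => j _.
by rewrite bweight_step; case: (y i j == h (x i j)) => /=; ring.
Qed.

Lemma bW_cw (R : realType) (d n m : nat)
  (x : 'I_n -> 'I_m -> cube d) (y : 'I_n -> 'I_m -> bool) (F : bstate R d n) (h : hyp d) i :
  bW x y F i = bcorrect x y F h i + bwrong x y F h i.
Proof.
rewrite /bW /bcorrect /bwrong -big_split /=; apply: eq_bigr => j _.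
by case: (y i j == h (x i j)) => /=; ring.
Qed.

Lemma bedge (R : realType) (d n m : nat)
  (x : 'I_n -> 'I_m -> cube d) (y : 'I_n -> 'I_m -> bool) (F : bstate R d n) (h : hyp d) i :
  \sum_(j < m) bweight x y F i j / bW x y F i * pm1 (y i j) * pm1 (h (x i j))
  = (bcorrect x y F h i - bwrong x y F h i) / bW x y F i.
Proof.
rewrite /bcorrect /bwrong -sumrB mulr_suml; apply: eq_bigr => j _.
by case: (y i j); case: (h (x i j)); rewrite /pm1 /=; ring.
Qed.

Lemma bcorrect_ge0 (R : realType) (d n m : nat)
  (x : 'I_n -> 'I_m -> cube d) (y : 'I_n -> 'I_m -> bool) (F : bstate R d n) (h : hyp d) i :
  0 <= bcorrect x y F h i.
Proof. by apply: sumr_ge0 => j _; rewrite mulr_ge0 ?ler0n ?expR_ge0. Qed.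

Lemma bwrong_ge0 (R : realType) (d n m : nat)
  (x : 'I_n -> 'I_m -> cube d) (y : 'I_n -> 'I_m -> bool) (F : bstate R d n) (h : hyp d) i :
  0 <= bwrong x y F h i.
Proof. by apply: sumr_ge0 => j _; rewrite mulr_ge0 ?ler0n ?expR_ge0. Qed.

Lemma key_ineq (R : realType) (c w e : R) : 0 < c -> 0 < w -> 0 < e ->
  e * e = c / w ->
  c * e^-1 + w * e <= (c + w) - (c - w) ^+ 2 / (c + w) / 2.
Proof.
move=> c0 w0 e0 he.
have hc : c = w * (e * e) by rewrite he mulrCA divff ?mulr1 // gt_eqF.
subst c.
have ew : 0 < e * e + 1 by nra.
have hw : 0 < w * (e * e) + w by nra.
have E : (w * (e * e) + w) - (w * (e * e) - w) ^+ 2 / (w * (e * e) + w) / 2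
   - (w * (e * e) * e^-1 + w * e) = w * (e - 1) ^+ 4 / (2 * (e * e + 1)).
  by field; rewrite ?gt_eqF //; nra.
rewrite -subr_ge0 E; apply: divr_ge0; last by nra.
by apply: mulr_ge0; [exact: ltW|rewrite exprn_even_ge0].
Qed.

Lemma bW_step_le (R : realType) (d n m : nat)
  (x : 'I_n -> 'I_m -> cube d) (y : 'I_n -> 'I_m -> bool) (F : bstate R d n) (h : hyp d) i :
  bcorrect x y F h i != 0 -> bwrong x y F h i != 0 ->
  bW x y (bstep x y F h) i <= bW x y F i -
    bW x y F i * (\sum_(j < m) bweight x y F i j / bW x y F i * pm1 (y i j) * pm1 (h (x i j))) ^+ 2 / 2.
Proof.
move=> hc hw.
have c0 : 0 < bcorrect x y F h i by rewrite lt_def hc bcorrect_ge0.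
have w0 : 0 < bwrong x y F h i by rewrite lt_def hw bwrong_ge0.
rewrite bW_step bedge (bW_cw _ _ _ _ x y F h i).
move: c0 w0; set c := bcorrect x y F h i; set w := bwrong x y F h i => c0 w0.
rewrite expRN.
have e0 : 0 < expR (balpha x y F h i) by apply: expR_gt0.
have ee : expR (balpha x y F h i) * expR (balpha x y F h i) = c / w.
  rewrite -expRD /balpha -splitr lnK // qualifE /=; exact: divr_gt0.
have := key_ineq _ _ _ _ c0 w0 e0 ee.
have -> : (c + w) * ((c - w) / (c + w)) ^+ 2 / 2 = (c - w) ^+ 2 / (c + w) / 2.
  by field; rewrite gt_eqF //; lra.
by [].
Qed.

Lemma T_step (R : realType) (d n m : nat)
  (x : 'I_n -> 'I_m -> cube d) (y : 'I_n -> 'I_m -> bool) (F : bstate R d n) (h : hyp d) :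
  (forall i, bcorrect x y F h i != 0 /\ bwrong x y F h i != 0) ->
  \sum_(i < n) bW x y (bstep x y F h) i <= \sum_(i < n) bW x y F i - bobjective x y F h / 2.
Proof.
move=> hcw; rewrite /bobjective mulr_suml -sumrB; apply: ler_sum => i _.
by have [hc hw] := hcw i; exact: bW_step_le.
Qed.

Lemma err_le (R : realType) (d n m : nat)
  (x : 'I_n -> 'I_m -> cube d) (y : 'I_n -> 'I_m -> bool) (F : bstate R d n) i j :
  (Num.sg (F i (x i j)) != pm1 (y i j) :> R)%:R <= bweight x y F i j.
Proof.
rewrite /bweight; case: eqP => [_|]; first exact: expR_ge0.
case: (y i j); rewrite /pm1 /= ?mul1r ?mulN1r ?opprK => hne.
- have [hF|hF] := leP (F i (x i j)) 0; last by case: hne; rewrite gtr0_sg.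
  by apply: le_trans (expR_ge1Dx _); lra.
- have [hF|hF] := leP 0 (F i (x i j)); last by case: hne; rewrite ltr0_sg.
  by apply: le_trans (expR_ge1Dx _); lra.
Qed.

Theorem mainTheorem3 (R : realType) (d n m : nat)
  (x : 'I_n -> 'I_m -> cube d) (y : 'I_n -> 'I_m -> bool)
  (H : {set hyp d}) (t : nat) (hs : seq (hyp d)) (Gamma : nat -> R) :
  boost_run R x y H t hs ->
  boost_well_defined R x y t hs ->
  (forall s, (s < t)%N -> 0 <= Gamma s <= 1) ->
  (forall s, (s < t)%N ->
     bobjective x y (bstate_of R x y (take s hs)) (nth (hyp_default d) hs s)
     = Gamma s * \sum_(i < n) bW x y (bstate_of R x y (take s hs)) i) ->
  ((n * m)%:R)^-1 *
    \sum_(i < n) \sum_(j < m)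
      (Num.sg (bstate_of R x y hs i (x i j)) != pm1 (y i j) :> R)%:R
  <= \prod_(s < t) (1 - Gamma s / 2).
Proof.
move=> [hsz _] hwd hG hobj.
have T0 : \sum_(i < n) bW x y (bstate_of R x y (take 0 hs)) i = (n * m)%:R.
  rewrite take0 /bW /bweight /bstate_of /= /bzero.
  under eq_bigr => i _ do under eq_bigr => j _ do rewrite mulr0 oppr0 expR0.
  by rewrite !sumr_const !card_ord -mulrnA mulnC.
have ind : forall s, (s <= t)%N ->
  \sum_(i < n) bW x y (bstate_of R x y (take s hs)) i
    <= (n * m)%:R * \prod_(k < s) (1 - Gamma k / 2).
  elim => [|s IH] hs_le; first by rewrite T0 big_ord0 mulr1.
  have slt : (s < t)%N by [].
  have hs_lt : (s < size hs)%N by rewrite hsz.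
  rewrite (take_nth (hyp_default d)) // /bstate_of foldl_rcons -/(bstate_of _ _ _ _).
  apply: le_trans (T_step _ _ _ _ _ _ _ _ _) _.
    by move=> i; have := hwd s slt i.
  rewrite hobj // big_ord_recr /= mulrA.
  have [g0 g1] := andP (hG s slt).
  have := IH (ltnW slt).
  set T := \sum_(i < n) _; set P := _ * \prod_(k < s) _ => hT.
  have -> : T - Gamma s * T / 2 = T * (1 - Gamma s / 2) by ring.
  by apply: ler_wpM2r => //; lra.
have hfin := ind t (leqnn t).
rewrite -{1}hsz take_size in hfin.
have herr : \sum_(i < n) \sum_(j < m)
      (Num.sg (bstate_of R x y hs i (x i j)) != pm1 (y i j) :> R)%:R
    <= \sum_(i < n) bW x y (bstate_of R x y hs) i.
  by apply: ler_sum => i _; apply: ler_sum => j _; exact: err_le.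
have Pge0 : 0 <= \prod_(s < t) (1 - Gamma s / 2).
  apply: prodr_ge0 => s _; have [_ g1] := andP (hG s (ltn_ord _ : (s < t)%N)).
  lra.
have [nm0|nm0] := eqVneq ((n * m)%:R : R) 0.
  by rewrite nm0 invr0 mul0r.
have nmp : 0 < ((n * m)%:R : R) by rewrite lt_def nm0 ler0n.
rewrite ler_pdivrMl //; exact: le_trans herr hfin.
Qed.
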